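(* Let $F:\mathbb{R}\to\mathbb{R}$ be smooth and $v:[0,1]\to\mathbb{R}$ smooth. For each $x\in[0,1]$ let $y(t,x)$ be the solution of $$\frac{d^2y(t,x)}{dt^2}=F(y(t,x)),\quad y(0,x)=x,\quad \frac{dy(0,x)}{dt}=v(x),$$ assumed to exist and be unique for all $t\in[0,\infty)$. Put $U(y)=-\int_0^yF(z)\,dz$ and $H_0(x)=\frac{v(x)^2}{2}+U(x)$. For $x\in[0,1]$ and $y\ge x$ let $T(x,y)$ be the first time moment at which $y(t,x)=y$. Assume: (i) $v(x)>0$ for all $x\in[0,1]$; (ii) $H_0(x)-U(y)>0$ for all $x\in[0,1]$ and all $y\ge x$. Then the following conditions are equivalent: 1) there are no collisions on $[0,\infty)$, i.e. $y(t,x)\neq y(t,x')$ for all $t\ge 0$ and all $x\neq x'$ in $[0,1]$; 2) for every $y>0$, the function $x\mapsto T(x,y)$ is strictly decreasing on $[0,\min\{y,1\}]$; 3) for every $y>0$ and every $x\in[0,\min\{y,1\}]$, $$\frac{1}{v(x)}+\frac{v(x)v'(x)-F(x)}{2\sqrt2}\int_x^y\frac{dz}{(H_0(x)-U(z))^{3/2}}\ge 0,$$ where equality can hold only on a discrete set of points.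
   Context: This concerns a one-dimensional continuum of non-interacting point particles: each point $x\in[0,1]$ is a particle with initial position $x$ and initial velocity $v(x)$, moving independently under the external force $F$ (unit mass). *)

(* Defs.v *)
From Stdlib Require Import Reals.
From Coquelicot Require Import Coquelicot.
Open Scope R_scope.

Definition smooth (f : R -> R) : Prop := forall (n : nat) (x : R), ex_derive_n f n x.

(* Derivative of f at t relative to the domain [0, +oo) (one-sided at t = 0). *)
Definition is_derive_nonneg (f : R -> R) (t l : R) : Prop :=
  filterlim (fun s => (f s - f t) / (s - t))
    (within (fun s => 0 <= s /\ s <> t) (locally t)) (locally l).

Definition is_solution (F : R -> R) (x0 v0 : R) (f : R -> R) : Prop :=
  exists df : R -> R,
    f 0 = x0 /\ df 0 = v0 /\
    forall t, 0 <= t -> is_derive_nonneg f t (df t) /\ is_derive_nonneg df t (F (f t)).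

Definition Upot (F : R -> R) (y : R) : R := - RInt F 0 y.

Definition H0 (F v : R -> R) (x : R) : R := v x ^ 2 / 2 + Upot F x.

Definition first_time (f : R -> R) (Y : R) : R :=
  real (Glb_Rbar (fun t => 0 <= t /\ f t = Y)).

Definition discrete_set (S : R -> Prop) : Prop :=
  forall x, S x -> exists eps : R, 0 < eps /\
    forall x', S x' -> Rabs (x' - x) < eps -> x' = x.

Definition crit_expr (F v : R -> R) (x y : R) : R :=
  / v x + (v x * Derive v x - F x) / (2 * sqrt 2) *
    RInt (fun z => / Rpower (H0 F v x - Upot F z) (3 / 2)) x y.

(* Main.v *)
Require Import Defs.
From Stdlib Require Import Reals Lra.
From Coquelicot Require Import Coquelicot.
Open Scope R_scope.

Lemma smooth_ex f : smooth f -> forall x, ex_derive f x.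
Proof. intros H x; exact (H 1%nat x). Qed.
Lemma smooth_ex2 f : smooth f -> forall x, ex_derive (Derive f) x.
Proof. intros H x; exact (H 2%nat x). Qed.
Lemma smooth_cont f : smooth f -> forall x, continuous f x.
Proof. intros H x; apply (ex_derive_continuous (V:=R_NormedModule) f x), smooth_ex; auto. Qed.
Lemma smooth_cont_pt f : smooth f -> forall x, continuity_pt f x.
Proof. intros H x; apply (proj2 (continuity_pt_filterlim _ _)), smooth_cont; auto. Qed.
Lemma smooth_dcont_pt f : smooth f -> forall x, continuity_pt (Derive f) x.
Proof. intros H x; apply (proj2 (continuity_pt_filterlim _ _)), (ex_derive_continuous (V:=R_NormedModule)), smooth_ex2; auto. Qed.

Lemma Upot_derive F : smooth F -> forall t, is_derive (Upot F) t (- F t).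
Proof.
  intros HF t. unfold Upot.
  apply (is_derive_opp (fun b => RInt F 0 b)).
  apply (is_derive_RInt (V:=R_NormedModule) F (fun b => RInt F 0 b) 0 t).
  - apply filter_forall; intros b. apply (RInt_correct (V:=R_CompleteNormedModule) F 0 b), (ex_RInt_continuous (V:=R_CompleteNormedModule)).
    intros; apply smooth_cont; auto.
  - apply smooth_cont; auto.
Qed.
Lemma Upot_cont F : smooth F -> forall t, continuity_pt (Upot F) t.
Proof. intros HF t; apply (proj2 (continuity_pt_filterlim _ _)), (ex_derive_continuous (V:=R_NormedModule)).
  eexists; apply Upot_derive; auto. Qed.

Definition dH0 F v x := v x * Derive v x - F x.
Lemma H0_derive F v : smooth F -> smooth v -> forall x, is_derive (H0 F v) x (dH0 F v x).
Proof.
  intros HF Hv x. unfold H0, dH0.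
  evar (l : R). replace (v x * Derive v x - F x) with l.
  apply (is_derive_plus (fun x => v x ^2 / 2) (Upot F)).
  apply (is_derive_ext (fun x => /2 * v x ^ 2)). intros; lra.
  apply is_derive_scal, is_derive_pow, Derive_correct, smooth_ex; auto.
  apply Upot_derive; auto.
  unfold l; simpl; unfold plus; simpl; field.
Qed.
Lemma H0_cont F v : smooth F -> smooth v -> forall x, continuity_pt (H0 F v) x.
Proof. intros HF Hv t; apply (proj2 (continuity_pt_filterlim _ _)), (ex_derive_continuous (V:=R_NormedModule)).
  eexists; apply H0_derive; auto. Qed.

Lemma nonneg_eps f t l : is_derive_nonneg f t l -> forall eps, 0 < eps ->
  exists d, 0 < d /\ forall s, 0 <= s -> s <> t -> Rabs (s - t) < d ->
    Rabs ((f s - f t)/(s-t) - l) < eps.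
Proof.
  intros H eps He.
  destruct (H (ball l (mkposreal eps He)) (locally_ball _ _)) as [d Hd].
  exists d. split; [apply cond_pos|]. intros s H1 H2 H3.
  apply (Hd s); [exact H3| split; auto].
Qed.

Definition ext (f : R -> R) (a : R) s := if Rlt_dec s 0 then f 0 + a * s else f s.

Lemma ext_pos f a s : 0 <= s -> ext f a s = f s.
Proof. intros; unfold ext; destruct (Rlt_dec s 0); lra. Qed.

Lemma ext_derive f a t l : 0 <= t -> is_derive_nonneg f t l -> (t = 0 -> l = a) ->
  is_derive (ext f a) t l.
Proof.
  intros Ht H Hl. apply is_derive_Reals. intros eps He.
  destruct (nonneg_eps f t l H eps He) as [d [Hd Hs]].
  destruct (Rle_lt_or_eq_dec 0 t Ht) as [Htp|Ht0].
  - assert (Hm : 0 < Rmin d t) by (apply Rmin_pos; lra).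
    exists (mkposreal _ Hm). intros h Hh0 Hh. simpl in Hh.
    assert (Rabs h < d) by (eapply Rlt_le_trans; [exact Hh| apply Rmin_l]).
    assert (Rabs h < t) by (eapply Rlt_le_trans; [exact Hh| apply Rmin_r]).
    assert (0 <= t + h) by (apply Rabs_def2 in H1; lra).
    rewrite !ext_pos by lra.
    specialize (Hs (t+h)). replace (t+h-t) with h in Hs by ring.
    apply Hs; auto. intro; apply Hh0; lra.
  - subst t. exists (mkposreal d Hd). intros h Hh0 Hh; simpl in Hh.
    rewrite (ext_pos f a 0) by lra.
    destruct (Rlt_dec h 0) as [hn|hp].
    + unfold ext at 1. destruct (Rlt_dec (0+h) 0); [|lra].
      rewrite Hl by auto. replace ((f 0 + a * (0 + h) - f 0) / h - a) with 0 by (field; auto).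
      rewrite Rabs_R0; lra.
    + rewrite ext_pos by lra.
      specialize (Hs (0+h)). replace (0+h-0) with h in Hs by ring.
      apply Hs; auto; lra.
Qed.

Lemma ext_derive_neg f a t : t < 0 -> is_derive (ext f a) t a.
Proof.
  intros Ht. apply (is_derive_ext_loc (fun s => f 0 + a * s)).
  - assert (Hp : 0 < - t) by lra. exists (mkposreal _ Hp). intros s Hs.
    unfold ext. destruct (Rlt_dec s 0); auto.
    exfalso. unfold ball in Hs; simpl in Hs; unfold AbsRing_ball, abs, minus, plus, opp in Hs; simpl in Hs.
    apply Rabs_def2 in Hs. lra.
  - auto_derive; auto; ring.
Qed.

Lemma deriv_pos_local g x l : is_derive g x l -> 0 < l ->
  exists d, 0 < d /\ forall h, 0 < h < d -> g (x - h) < g x < g (x + h).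
Proof.
  intros H Hl. apply is_derive_Reals in H. destruct (H l Hl) as [d Hd].
  exists d. split; [apply cond_pos|]. intros h Hh.
  assert (Hh1 : Rabs h < d) by (rewrite Rabs_right; lra).
  assert (Hh2 : Rabs (-h) < d) by (rewrite Rabs_left; lra).
  pose proof (Hd h ltac:(lra) Hh1) as A1.
  pose proof (Hd (-h) ltac:(lra) Hh2) as A2.
  apply Rabs_def2 in A1. apply Rabs_def2 in A2.
  set (q1 := (g (x + h) - g x) / h) in *.
  set (q2 := (g (x + - h) - g x) / - h) in *.
  assert (E1 : g (x+h) - g x = q1 * h) by (unfold q1; field; lra).
  assert (E2 : g (x + - h) - g x = q2 * (-h)) by (unfold q2; field; lra).
  replace (x - h) with (x + - h) by ring. split; nra.
Qed.

Lemma deriv_neg_local g x l : is_derive g x l -> l < 0 ->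
  exists d, 0 < d /\ forall h, 0 < h < d -> g (x + h) < g x < g (x - h).
Proof.
  intros H Hl. assert (H' : is_derive (fun s => - g s) x (- l)).
  { apply (is_derive_opp g x l H). }
  destruct (deriv_pos_local _ _ _ H' ltac:(lra)) as [d [Hd Hh]].
  exists d; split; auto. intros h Hh'. specialize (Hh h Hh'). lra.
Qed.

Lemma deriv_max_zero g M l a b : is_derive g M l -> a < M < b ->
  (forall s, a < s < b -> g s <= g M) -> l = 0.
Proof.
  intros H HM Hmax. destruct (Rtotal_order l 0) as [Hl|[Hl|Hl]]; auto; exfalso.
  - destruct (deriv_neg_local g M l H Hl) as [d [Hd Hh]].
    set (h := Rmin d (M - a) / 2).
    assert (0 < Rmin d (M-a)) by (apply Rmin_pos; lra).
    assert (Rmin d (M-a) <= d) by apply Rmin_l. assert (Rmin d (M-a) <= M - a) by apply Rmin_r.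
    specialize (Hh h ltac:(unfold h; lra)). specialize (Hmax (M - h) ltac:(unfold h; lra)). lra.
  - destruct (deriv_pos_local g M l H Hl) as [d [Hd Hh]].
    set (h := Rmin d (b - M) / 2).
    assert (0 < Rmin d (b - M)) by (apply Rmin_pos; lra).
    assert (Rmin d (b-M) <= d) by apply Rmin_l. assert (Rmin d (b-M) <= b - M) by apply Rmin_r.
    specialize (Hh h ltac:(unfold h; lra)). specialize (Hmax (M + h) ltac:(unfold h; lra)). lra.
Qed.

Lemma first_time_eq f Y tau : (forall t1 t2, 0 <= t1 < t2 -> f t1 < f t2) ->
  0 <= tau -> f tau = Y -> first_time f Y = tau.
Proof.
  intros Hm Ht Hf. unfold first_time.
  rewrite (is_glb_Rbar_unique _ (Finite tau)); [reflexivity|].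
  split.
  - intros t [H0 H1]. simpl. destruct (Rlt_le_dec t tau) as [Hl|Hl]; auto.
    specialize (Hm t tau ltac:(lra)). lra.
  - intros b Hb. apply Hb. auto.
Qed.

Lemma Rpower_derive w c : 0 < w -> is_derive (fun w => Rpower w c) w (c * Rpower w (c - 1)).
Proof. intros H; apply is_derive_Reals; exact (derivable_pt_lim_power w c H). Qed.

Lemma Rpower_cont w c : 0 < w -> continuity_pt (fun w => Rpower w c) w.
Proof. intros. apply (proj2 (continuity_pt_filterlim (fun w => Rpower w c) w)), (ex_derive_continuous (V:=R_NormedModule) (fun w => Rpower w c) w).
  eexists; apply Rpower_derive; auto. Qed.

Lemma Rpower_pos w c : 0 < Rpower w c.
Proof. unfold Rpower; apply exp_pos. Qed.

Lemma der_cont g t l : is_derive g t l -> continuity_pt g t.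
Proof. intros H. apply (proj2 (continuity_pt_filterlim g t)), (ex_derive_continuous (V:=R_NormedModule) g t).
  exists l; auto. Qed.

Section Particle.
Variables F v : R -> R.
Hypothesis HF : smooth F.
Hypothesis Hv : smooth v.
Variable x : R.
Hypothesis Hvx : 0 < v x.
Hypothesis Hii : forall z, x <= z -> 0 < H0 F v x - Upot F z.
Variables f df : R -> R.
Hypothesis Hf0 : f 0 = x.
Hypothesis Hdf0 : df 0 = v x.
Hypothesis Hd : forall t, 0 <= t -> is_derive_nonneg f t (df t) /\ is_derive_nonneg df t (F (f t)).

Let fe := ext f (df 0).
Let dfe := ext df (F (f 0)).

Lemma fe_der t : 0 <= t -> is_derive fe t (df t).
Proof. intros Ht. apply ext_derive; auto. apply Hd; auto. intros ->; auto. Qed.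
Lemma dfe_der t : 0 <= t -> is_derive dfe t (F (f t)).
Proof. intros Ht. apply ext_derive; auto. apply Hd; auto. intros ->; auto. Qed.
Lemma fe_cont : continuity fe.
Proof. intros t. destruct (Rlt_le_dec t 0).
  - eapply der_cont, ext_derive_neg; auto.
  - eapply der_cont, fe_der; auto. Qed.
Lemma dfe_cont : continuity dfe.
Proof. intros t. destruct (Rlt_le_dec t 0).
  - eapply der_cont, ext_derive_neg; auto.
  - eapply der_cont, dfe_der; auto. Qed.

Lemma energy t : 0 <= t -> df t ^ 2 = 2 * (H0 F v x - Upot F (f t)).
Proof.
  intros Ht.
  set (E := fun s => dfe s ^ 2 / 2 + Upot F (fe s)).
  assert (HE : forall s, 0 <= s -> is_derive E s 0).
  { intros s Hs. unfold E.
    evar (l : R). replace 0 with l.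
    apply (is_derive_plus (fun s => dfe s ^ 2 / 2) (fun s => Upot F (fe s))).
    apply (is_derive_ext (fun s => /2 * dfe s ^ 2)). intros; lra.
    apply is_derive_scal, is_derive_pow, dfe_der; auto.
    apply (is_derive_comp (Upot F) fe). apply Upot_derive; auto. apply fe_der; auto.
    unfold l, fe, dfe; rewrite !ext_pos by lra. simpl; unfold plus, scal; simpl; unfold mult; simpl. field. }
  destruct (Rle_lt_or_eq_dec 0 t Ht) as [Htp|Ht0].
  - destruct (MVT_gen E 0 t (fun _ => 0)) as [c [Hc HEc]].
    + intros s Hs. rewrite Rmin_left in Hs by lra. apply HE; lra.
    + intros s Hs. rewrite Rmin_left in Hs by lra. eapply der_cont, HE; lra.
    + unfold E, fe, dfe in HEc. rewrite !ext_pos in HEc by lra. rewrite Hf0, Hdf0 in HEc.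
      unfold H0. lra.
  - subst t. rewrite Hf0, Hdf0. unfold H0. field.
Qed.

Lemma f_ge_x t : 0 <= t -> x <= f t.
Proof.
  intros Ht. destruct (Rle_lt_dec x (f t)) as [|Hlt]; auto. exfalso.
  assert (Htp : 0 < t) by (destruct (Rle_lt_or_eq_dec 0 t Ht); auto; subst; lra).
  destruct (deriv_pos_local fe 0 (df 0) (fe_der 0 (Rle_refl 0))) as [d [Hd0 Hh]].
  { lra. }
  set (h := Rmin d t / 2).
  assert (0 < Rmin d t) by (apply Rmin_pos; lra).
  assert (Rmin d t <= d) by apply Rmin_l. assert (Rmin d t <= t) by apply Rmin_r.
  specialize (Hh h ltac:(unfold h; lra)). destruct Hh as [_ Hh].
  destruct (continuity_ab_maj fe 0 t Ht (fun c _ => fe_cont c)) as [M [HM1 HM2]].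
  assert (E0 : fe 0 = x) by (unfold fe; rewrite ext_pos by lra; auto).
  assert (Et : fe t = f t) by (unfold fe; rewrite ext_pos by lra; auto).
  assert (fe h <= fe M) by (apply HM1; unfold h; lra).
  assert (Eh : fe (0 + h) = fe h) by (f_equal; ring). rewrite Eh in Hh.
  assert (HM0 : 0 < M < t).
  { split.
    - destruct (Rle_lt_or_eq_dec 0 M (proj1 HM2)); auto. subst M. lra.
    - destruct (Rle_lt_or_eq_dec M t (proj2 HM2)); auto. subst M. lra. }
  assert (Hdm : df M = 0).
  { apply (deriv_max_zero fe M (df M) 0 t); auto. apply fe_der; lra.
    intros s Hs; apply HM1; lra. }
  pose proof (energy M ltac:(lra)) as HEn. rewrite Hdm in HEn.
  assert (fe M = f M) by (unfold fe; rewrite ext_pos by lra; auto).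
  pose proof (Hii (f M) ltac:(lra)). lra.
Qed.

Lemma df_pos t : 0 <= t -> 0 < df t.
Proof.
  intros Ht.
  assert (Hnz : forall s, 0 <= s -> df s <> 0).
  { intros s Hs E. pose proof (energy s Hs) as HE. rewrite E in HE.
    pose proof (Hii (f s) (f_ge_x s Hs)). lra. }
  destruct (Rlt_le_dec 0 (df t)) as [|Hle]; auto. exfalso.
  destruct (IVT_gen dfe 0 t 0 dfe_cont) as [s [Hs Hs0]].
  - unfold dfe; rewrite !ext_pos by lra. rewrite Hdf0.
    rewrite Rmin_right by lra. rewrite Rmax_left by lra. lra.
  - rewrite Rmin_left in Hs by lra. rewrite Rmax_right in Hs by lra.
    unfold dfe in Hs0; rewrite ext_pos in Hs0 by lra. apply (Hnz s); auto; lra.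
Qed.

Lemma f_mono t1 t2 : 0 <= t1 < t2 -> f t1 < f t2.
Proof.
  intros Ht. destruct (MVT_gen fe t1 t2 df) as [c [Hc Hfc]].
  - intros s Hs. rewrite Rmin_left in Hs by lra. apply fe_der; lra.
  - intros s Hs. rewrite Rmin_left in Hs by lra. rewrite Rmax_right in Hs by lra.
    apply fe_cont.
  - rewrite Rmin_left in Hc by lra. rewrite Rmax_right in Hc by lra.
    unfold fe in Hfc; rewrite !ext_pos in Hfc by lra.
    pose proof (df_pos c ltac:(lra)). nra.
Qed.

Lemma f_mono_le t1 t2 : 0 <= t1 <= t2 -> f t1 <= f t2.
Proof. intros [H1 H2]. destruct (Rle_lt_or_eq_dec _ _ H2). left; apply f_mono; lra. subst; lra. Qed.

Lemma hit Y : x <= Y -> exists tau, 0 <= tau /\ f tau = Y.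
Proof.
  intros HY.
  destruct (continuity_ab_min (fun z => H0 F v x - Upot F z) x Y HY) as [zm [Hzm1 Hzm2]].
  { intros c _. apply continuity_pt_minus. apply continuity_pt_const. intros a b; auto.
    apply Upot_cont; auto. }
  set (m0 := H0 F v x - Upot F zm).
  assert (Hm0 : 0 < m0) by (apply Hii; lra).
  set (c := sqrt (2 * m0)).
  assert (Hc : 0 < c) by (apply sqrt_lt_R0; lra).
  assert (Hc2 : c * c = 2 * m0) by (apply sqrt_sqrt; lra).
  set (ts := (Y - x) / c).
  assert (Hts : 0 <= ts) by (unfold ts; apply Rdiv_le_0_compat; lra).
  assert (E0 : fe 0 = x) by (unfold fe; rewrite ext_pos by lra; auto).
  destruct (Rle_lt_dec Y (f ts)) as [Hge|Hlt].
  - destruct (IVT_gen fe 0 ts Y fe_cont) as [tau [Htau Hfe]].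
    + assert (Ets : fe ts = f ts) by (unfold fe; rewrite ext_pos by lra; auto).
      rewrite E0, Ets. rewrite Rmin_left by lra. rewrite Rmax_right by lra. lra.
    + rewrite Rmin_left in Htau by lra. exists tau. split; [lra|].
      unfold fe in Hfe; rewrite ext_pos in Hfe by lra; auto.
  - exfalso.
    destruct (Rle_lt_or_eq_dec 0 ts Hts) as [Htsp|Hts0].
    2:{ rewrite <- Hts0, Hf0 in Hlt. assert (Y - x = ts * c) by (unfold ts; field; lra).
        rewrite <- Hts0 in H. lra. }
    destruct (MVT_gen fe 0 ts df) as [c' [Hc' Hfc]].
    + intros s Hs. rewrite Rmin_left in Hs by lra. apply fe_der; lra.
    + intros s Hs. apply fe_cont.
    + rewrite Rmin_left in Hc' by lra. rewrite Rmax_right in Hc' by lra.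
      unfold fe in Hfc; rewrite !ext_pos in Hfc by lra. rewrite Hf0 in Hfc.
      pose proof (df_pos c' ltac:(lra)) as Hdp.
      pose proof (energy c' ltac:(lra)) as HE.
      pose proof (f_ge_x c' ltac:(lra)) as Hg1.
      pose proof (f_mono_le c' ts ltac:(lra)) as Hg2.
      assert (Hg3 : H0 F v x - Upot F (f c') >= m0) by (apply Rle_ge, Hzm1; lra).
      assert (df c' >= c).
      { destruct (Rlt_le_dec (df c') c) as [Hl|Hl]; [|lra]. exfalso.
        assert (df c' * df c' < c * c).
        { apply Rle_lt_trans with (c * df c'). apply Rmult_le_compat_r; lra.
          apply Rmult_lt_compat_l; lra. }
        simpl in HE. lra. }
      assert (c * ts = Y - x) by (unfold ts; field; lra).
      nra.
Qed.

Lemma first_time_f Y tau : 0 <= tau -> f tau = Y -> first_time f Y = tau.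
Proof. apply first_time_eq. apply f_mono. Qed.
End Particle.

Lemma cont_eps f x : continuity_pt f x -> forall eps, 0 < eps ->
  exists d, 0 < d /\ forall y, Rabs (y - x) < d -> Rabs (f y - f x) < eps.
Proof.
  intros H eps He. destruct (proj1 (continuity_pt_locally f x) H (mkposreal eps He)) as [d Hd].
  exists d. split; [apply cond_pos|]. intros y Hy. apply Hd. exact Hy.
Qed.

Lemma ball_R x e y : ball x e y <-> Rabs (y - x) < e.
Proof. tauto. Qed.

Definition gfun F v u z := Rpower (2 * (H0 F v u - Upot F z)) (- / 2).

Lemma g_der_z F v u z : smooth F -> 0 < H0 F v u - Upot F z ->
  is_derive (gfun F v u) z (2 * F z * (- / 2 * Rpower (2 * (H0 F v u - Upot F z)) (- / 2 - 1))).
Proof.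
  intros HF Hp. unfold gfun.
  apply (is_derive_comp (fun w => Rpower w (-/2)) (fun z => 2 * (H0 F v u - Upot F z))).
  apply Rpower_derive; lra.
  evar (l : R). replace (2 * F z) with l.
  apply is_derive_scal. apply (is_derive_minus (fun _ => H0 F v u) (Upot F)).
  apply is_derive_const. apply Upot_derive; auto.
  unfold l, minus, plus, opp, zero; simpl. ring.
Qed.

Lemma g_cont F v u z : smooth F -> 0 < H0 F v u - Upot F z -> continuous (gfun F v u) z.
Proof. intros HF Hp. apply (ex_derive_continuous (V:=R_NormedModule) (gfun F v u) z).
  eexists; apply g_der_z; auto. Qed.

Lemma g_cont_pt F v u z : smooth F -> 0 < H0 F v u - Upot F z -> continuity_pt (gfun F v u) z.
Proof. intros. apply (proj2 (continuity_pt_filterlim _ _)). apply g_cont; auto. Qed.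

Section Particle2.
Variables F v : R -> R.
Hypothesis HF : smooth F.
Hypothesis Hv : smooth v.
Variable x : R.
Hypothesis Hvx : 0 < v x.
Hypothesis Hii : forall z, x <= z -> 0 < H0 F v x - Upot F z.
Variables f df : R -> R.
Hypothesis Hf0 : f 0 = x.
Hypothesis Hdf0 : df 0 = v x.
Hypothesis Hd : forall t, 0 <= t -> is_derive_nonneg f t (df t) /\ is_derive_nonneg df t (F (f t)).

Lemma near_pos : exists d, 0 < d /\ forall z, x - d <= z -> 0 < H0 F v x - Upot F z.
Proof.
  assert (He : 0 < v x ^ 2 / 4) by (simpl; nra).
  destruct (cont_eps _ _ (Upot_cont F HF x) _ He) as [d [Hd0 Hdd]].
  exists (d / 2). split; [lra|]. intros z Hz.
  destruct (Rle_lt_dec x z); [apply Hii; auto|].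
  assert (Rabs (z - x) < d) by (rewrite Rabs_left; lra).
  specialize (Hdd z H). apply Rabs_def2 in Hdd. unfold H0. lra.
Qed.

Lemma phi_der s : x <= s -> is_derive (fun b => RInt (gfun F v x) x b) s (gfun F v x s).
Proof.
  intros Hs. destruct near_pos as [d [Hd0 Hp]].
  apply (is_derive_RInt (V:=R_NormedModule) (gfun F v x) (fun b => RInt (gfun F v x) x b) x s).
  - exists (mkposreal d Hd0). intros b Hb. apply ball_R in Hb. simpl in Hb.
    apply (RInt_correct (V:=R_CompleteNormedModule)), (ex_RInt_continuous (V:=R_CompleteNormedModule)).
    intros z Hz. apply g_cont; auto. apply Hp.
    apply Rabs_def2 in Hb. unfold minus, plus, opp in Hb; simpl in Hb. pose proof (Rmin_l x b). pose proof (Rmin_r x b).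
    destruct (Rle_lt_dec x b).
    + rewrite Rmin_left in Hz by lra. lra.
    + rewrite Rmin_right in Hz by lra. lra.
  - apply g_cont; auto.
Qed.

Lemma g_df t : 0 <= t -> gfun F v x (f t) * df t = 1.
Proof.
  intros Ht. pose proof (energy F v HF x f df Hf0 Hdf0 Hd t Ht) as HE.
  pose proof (df_pos F v HF x Hvx Hii f df Hf0 Hdf0 Hd t Ht) as Hp.
  pose proof (Hii (f t) (f_ge_x F v HF x Hvx Hii f df Hf0 Hdf0 Hd t Ht)) as Hq.
  assert (E : df t = Rpower (2 * (H0 F v x - Upot F (f t))) (/2)).
  { rewrite Rpower_sqrt by lra. rewrite <- HE. rewrite sqrt_pow2; lra. }
  rewrite E. unfold gfun. rewrite <- Rpower_plus.
  replace (- / 2 + / 2) with 0 by field. apply Rpower_O. lra.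
Qed.

Lemma T_formula tau : 0 <= tau -> RInt (gfun F v x) x (f tau) = tau.
Proof.
  intros Htau.
  set (fe := ext f (df 0)).
  assert (Hfe : forall t, 0 <= t -> fe t = f t) by (intros; unfold fe; apply ext_pos; auto).
  set (Psi := fun t => RInt (gfun F v x) x (fe t) - t).
  assert (HP : forall t, 0 <= t -> is_derive Psi t 0).
  { intros t Ht. unfold Psi.
    evar (l : R). replace 0 with l.
    apply (is_derive_minus (fun t => RInt (gfun F v x) x (fe t)) (fun t => t)).
    apply (is_derive_comp (fun b => RInt (gfun F v x) x b) fe).
    apply phi_der. rewrite Hfe by auto. apply (f_ge_x F v HF x Hvx Hii f df Hf0 Hdf0 Hd t Ht).
    apply (fe_der F f df Hd t Ht). apply is_derive_id.
    unfold l. rewrite Hfe by auto. unfold minus, plus, opp, scal, one; simpl; unfold mult; simpl.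
    rewrite Rmult_comm, g_df by auto. ring. }
  destruct (Rle_lt_or_eq_dec 0 tau Htau) as [Hp|H0'].
  - destruct (MVT_gen Psi 0 tau (fun _ => 0)) as [c [Hc HPc]].
    + intros s Hs. rewrite Rmin_left in Hs by lra. apply HP; lra.
    + intros s Hs. rewrite Rmin_left in Hs by lra. eapply der_cont, HP; lra.
    + unfold Psi in HPc. rewrite !Hfe in HPc by lra. rewrite Hf0, RInt_point in HPc.
      unfold zero in HPc; simpl in HPc. lra.
  - subst tau. rewrite Hf0, RInt_point. reflexivity.
Qed.

Lemma T_first Y : x <= Y -> first_time f Y = RInt (gfun F v x) x Y /\
   0 <= first_time f Y /\ f (first_time f Y) = Y.
Proof.
  intros HY. destruct (hit F v HF x Hvx Hii f df Hf0 Hdf0 Hd Y HY) as [tau [Ht Hf]].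
  rewrite (first_time_f F v HF x Hvx Hii f df Hf0 Hdf0 Hd Y tau Ht Hf).
  rewrite <- Hf at 1. rewrite T_formula; auto.
Qed.
End Particle2.

Lemma cont2_u (h : R -> R) u t : continuity_pt h u -> continuity_2d_pt (fun a _ => h a) u t.
Proof. intros H. apply (continuity_1d_2d_pt_comp h (fun a _ => a)); auto. apply continuity_2d_pt_id1. Qed.
Lemma cont2_t (h : R -> R) u t : continuity_pt h t -> continuity_2d_pt (fun _ b => h b) u t.
Proof. intros H. apply (continuity_1d_2d_pt_comp h (fun _ b => b)); auto. apply continuity_2d_pt_id2. Qed.

Section Global.
Variables F v : R -> R.
Hypothesis HF : smooth F.
Hypothesis Hv : smooth v.

Definition P u t := H0 F v u - Upot F t.
Definition dg u t := 2 * dH0 F v u * (- / 2 * Rpower (2 * (H0 F v u - Upot F t)) (- / 2 - 1)).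
Definition Dg u t := Derive (fun z => gfun F v z t) u.

Lemma P_cont2 u t : continuity_2d_pt P u t.
Proof. unfold P. apply (continuity_2d_pt_minus (fun a _ => H0 F v a) (fun _ b => Upot F b)).
  apply cont2_u, H0_cont; auto. apply cont2_t, Upot_cont; auto. Qed.

Lemma dH0_cont u : continuity_pt (dH0 F v) u.
Proof. unfold dH0. apply (continuity_pt_minus (fun u => v u * Derive v u) F).
  apply (continuity_pt_mult v (Derive v)). apply smooth_cont_pt; auto. apply smooth_dcont_pt; auto.
  apply smooth_cont_pt; auto. Qed.

Lemma g_der_u u t : 0 < P u t -> is_derive (fun z => gfun F v z t) u (dg u t).
Proof.
  intros Hp. unfold gfun, dg.
  apply (is_derive_comp (fun w => Rpower w (-/2)) (fun z => 2 * (H0 F v z - Upot F t))).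
  apply Rpower_derive. unfold P in Hp; lra.
  apply is_derive_scal. apply (is_derive_ext (fun z => H0 F v z - Upot F t)). reflexivity.
  evar (l : R). replace (dH0 F v u) with l.
  apply (is_derive_minus (H0 F v) (fun _ => Upot F t)). apply H0_derive; auto. apply is_derive_const.
  unfold l, minus, plus, opp, zero; simpl. ring.
Qed.

Lemma dg_cont2 u t : 0 < P u t -> continuity_2d_pt dg u t.
Proof.
  intros Hp. unfold dg.
  apply (continuity_2d_pt_mult (fun a _ => 2 * dH0 F v a)).
  apply cont2_u. apply (continuity_pt_mult (fun _ => 2) (dH0 F v)). apply continuity_pt_const. intros a b; auto.
  apply dH0_cont.
  apply (continuity_2d_pt_mult (fun _ _ => -/2)). apply continuity_2d_pt_const.
  apply (continuity_1d_2d_pt_comp (fun w => Rpower w (-/2 - 1)) (fun a b => 2 * (H0 F v a - Upot F b))).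
  apply Rpower_cont. unfold P in Hp; lra.
  apply (continuity_2d_pt_mult (fun _ _ => 2) P). apply continuity_2d_pt_const. apply P_cont2.
Qed.

Lemma P_pos_loc u t : 0 < P u t -> locally_2d (fun a b => 0 < P a b) u t.
Proof.
  intros Hp. destruct (P_cont2 u t (mkposreal _ Hp)) as [d Hd].
  exists d. intros a b Ha Hb. specialize (Hd a b Ha Hb). simpl in Hd. apply Rabs_def2 in Hd. lra.
Qed.

Lemma Dg_cont2 u t : 0 < P u t -> continuity_2d_pt Dg u t.
Proof.
  intros Hp. apply (continuity_2d_pt_ext_loc dg Dg).
  - destruct (P_pos_loc u t Hp) as [d Hd]. exists d. intros a b Ha Hb.
    unfold Dg. symmetry. apply is_derive_unique, g_der_u. apply Hd; auto.
  - apply dg_cont2; auto.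
Qed.

Lemma h_der x z : 0 < P x z ->
  ex_derive (fun z => / Rpower (H0 F v x - Upot F z) (3/2)) z.
Proof.
  intros Hp. eexists. apply (is_derive_inv (fun z => Rpower (H0 F v x - Upot F z) (3/2))).
  apply (is_derive_comp (fun w => Rpower w (3/2)) (fun z => H0 F v x - Upot F z)).
  apply Rpower_derive. unfold P in Hp; lra.
  apply (is_derive_minus (fun _ => H0 F v x) (Upot F)). apply is_derive_const. apply Upot_derive; auto.
  apply Rgt_not_eq, Rpower_pos.
Qed.

Lemma h_cont x z : 0 < P x z -> continuous (fun z => / Rpower (H0 F v x - Upot F z) (3/2)) z.
Proof. intros Hp. apply (ex_derive_continuous (V:=R_NormedModule)), h_der; auto. Qed.

End Global.

Section Global2.
Variables F v : R -> R.
Hypothesis HF : smooth F.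
Hypothesis Hv : smooth v.
Hypothesis Hvpos : forall x, 0 <= x <= 1 -> 0 < v x.
Hypothesis Hii : forall x z, 0 <= x <= 1 -> x <= z -> 0 < H0 F v x - Upot F z.

Lemma region x0 Y : 0 <= x0 <= 1 -> x0 <= Y -> exists e, 0 < e /\
  forall u t, Rabs (u - x0) < e -> x0 - e <= t <= Y + e -> 0 < P F v u t.
Proof.
  intros Hx HY.
  destruct (continuity_ab_min (fun z => H0 F v x0 - Upot F z) x0 Y HY) as [zm [Hzm1 Hzm2]].
  { intros c _. apply continuity_pt_minus. apply continuity_pt_const. intros a b; auto.
    apply Upot_cont; auto. }
  set (m0 := H0 F v x0 - Upot F zm).
  assert (Hm0 : 0 < m0) by (apply Hii; lra).
  assert (Hm4 : 0 < m0 / 4) by lra.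
  destruct (cont_eps _ _ (Upot_cont F HF x0) _ Hm4) as [d1 [Hd1 H1]].
  destruct (cont_eps _ _ (Upot_cont F HF Y) _ Hm4) as [d2 [Hd2 H2]].
  destruct (cont_eps _ _ (H0_cont F v HF Hv x0) _ Hm4) as [d3 [Hd3 H3]].
  set (e := Rmin d1 (Rmin d2 d3) / 2).
  assert (He1 : e < d1) by (unfold e; pose proof (Rmin_l d1 (Rmin d2 d3)); pose proof (Rmin_pos d2 d3 Hd2 Hd3);
     pose proof (Rmin_pos d1 _ Hd1 (Rmin_pos d2 d3 Hd2 Hd3)); lra).
  assert (He2 : e < d2) by (unfold e; pose proof (Rmin_r d1 (Rmin d2 d3)); pose proof (Rmin_l d2 d3);
     pose proof (Rmin_pos d1 _ Hd1 (Rmin_pos d2 d3 Hd2 Hd3)); lra).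
  assert (He3 : e < d3) by (unfold e; pose proof (Rmin_r d1 (Rmin d2 d3)); pose proof (Rmin_r d2 d3);
     pose proof (Rmin_pos d1 _ Hd1 (Rmin_pos d2 d3 Hd2 Hd3)); lra).
  assert (He : 0 < e) by (unfold e; pose proof (Rmin_pos d1 _ Hd1 (Rmin_pos d2 d3 Hd2 Hd3)); lra).
  exists e. split; auto. intros u t Hu Ht.
  assert (Hx0 : H0 F v x0 - Upot F t > 3 * m0 / 4).
  { destruct (Rlt_le_dec t x0) as [Hlt|Hge].
    - assert (Rabs (t - x0) < d1) by (rewrite Rabs_left; lra).
      specialize (H1 t H). apply Rabs_def2 in H1.
      assert (H0 F v x0 - Upot F x0 >= m0) by (apply Rle_ge, Hzm1; lra). unfold m0 in *. lra.
    - destruct (Rle_lt_dec t Y) as [Hle|Hgt].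
      + assert (H0 F v x0 - Upot F t >= m0) by (apply Rle_ge, Hzm1; lra). unfold m0 in *; lra.
      + assert (Rabs (t - Y) < d2) by (rewrite Rabs_right; lra).
        specialize (H2 t H). apply Rabs_def2 in H2.
        assert (H0 F v x0 - Upot F Y >= m0) by (apply Rle_ge, Hzm1; lra). unfold m0 in *. lra. }
  assert (Rabs (u - x0) < d3) by lra.
  specialize (H3 u H). apply Rabs_def2 in H3. unfold P. lra.
Qed.


Lemma Gder_raw x0 Y : 0 <= x0 <= 1 -> x0 <= Y ->
  is_derive (fun u => RInt (fun t => gfun F v u t) u Y) x0
    (RInt (fun t => Derive (fun u => gfun F v u t) x0) x0 Y + - gfun F v x0 x0 * 1).
Proof.
  intros Hx HY. destruct (region x0 Y Hx HY) as [e [He Hr]].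
  assert (He2 : 0 < e / 2) by lra.
  apply (is_derive_RInt_param_bound_comp_aux2 (fun u t => gfun F v u t) (fun u => u) Y x0 1).
  - exists (mkposreal e He). intros u Hu. apply ball_R in Hu. simpl in Hu.
    apply (ex_RInt_continuous (V:=R_CompleteNormedModule)). intros z Hz.
    rewrite Rmin_left in Hz by lra. rewrite Rmax_right in Hz by lra.
    apply g_cont; auto. apply Hr; [exact Hu| lra].
  - exists (mkposreal _ He2). exists (mkposreal e He). intros u Hu. apply ball_R in Hu. simpl in Hu.
    apply (ex_RInt_continuous (V:=R_CompleteNormedModule)). intros z Hz.
    simpl in Hz. rewrite Rmin_left in Hz by lra. rewrite Rmax_right in Hz by lra.
    apply g_cont; auto. apply Hr; [exact Hu| lra].
  - exact (is_derive_id (K:=R_AbsRing) x0).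
  - exists (mkposreal _ He2). exists (mkposreal e He). intros u Hu t Ht. apply ball_R in Hu. simpl in Hu, Ht.
    eexists. apply g_der_u; auto. apply Hr; [exact Hu|].
    pose proof (Rmin_l (x0 - e/2) Y). pose proof (Rmin_r (x0 - e/2) Y).
    pose proof (Rmax_l (x0 + e/2) Y). pose proof (Rmax_r (x0 + e/2) Y).
    split.
    + destruct (Rle_lt_dec (x0 - e/2) Y); [rewrite Rmin_left in Ht by lra| rewrite Rmin_right in Ht by lra]; lra.
    + destruct (Rle_lt_dec (x0 + e/2) Y); [rewrite Rmax_right in Ht by lra| rewrite Rmax_left in Ht by lra]; lra.
  - intros t Ht. rewrite Rmin_left in Ht by lra. rewrite Rmax_right in Ht by lra.
    apply (Dg_cont2 F v HF Hv). apply Hr. rewrite Rminus_diag_eq, Rabs_R0; auto. lra.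
  - exists (mkposreal e He). intros a b Ha Hb. simpl in Ha, Hb.
    apply (Dg_cont2 F v HF Hv). apply Hr; auto. apply Rabs_def2 in Hb. lra.
  - apply g_cont_pt; auto. apply (Hr x0 x0). rewrite Rminus_diag_eq, Rabs_R0; auto. lra.
Qed.


Lemma RInt_Rmult_l (h : R -> R) a b k : ex_RInt h a b -> RInt (fun t => k * h t) a b = k * RInt h a b.
Proof. intros H. apply is_RInt_unique. exact (is_RInt_scal (V:=R_CompleteNormedModule) h a b k (RInt h a b) (RInt_correct _ _ _ H)). Qed.

Lemma Rpower_2_32 : Rpower 2 (3/2) = 2 * sqrt 2.
Proof. replace (3/2) with (1 + /2) by field. rewrite Rpower_plus, Rpower_1, Rpower_sqrt; lra. Qed.

Lemma Gder x0 Y : 0 <= x0 <= 1 -> x0 <= Y ->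
  is_derive (fun u => RInt (gfun F v u) u Y) x0 (- crit_expr F v x0 Y).
Proof.
  intros Hx HY.
  assert (Hvx := Hvpos x0 Hx).
  pose proof (Gder_raw x0 Y Hx HY) as HD.
  match type of HD with is_derive _ _ ?l => replace (- crit_expr F v x0 Y) with l; [exact HD|] end.
  assert (Eg : gfun F v x0 x0 = / v x0).
  { unfold gfun. replace (2 * (H0 F v x0 - Upot F x0)) with (v x0 ^ 2) by (unfold H0; field).
    rewrite Rpower_Ropp, Rpower_sqrt by nra. rewrite sqrt_pow2; lra. }
  set (k := - dH0 F v x0 / (2 * sqrt 2)).
  set (h := fun z => / Rpower (H0 F v x0 - Upot F z) (3/2)).
  assert (Hs2 : 0 < sqrt 2) by (apply sqrt_lt_R0; lra).
  assert (EI : RInt (fun t => Derive (fun u => gfun F v u t) x0) x0 Y = RInt (fun t => k * h t) x0 Y).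
  { apply RInt_ext. intros t Ht. rewrite Rmin_left in Ht by lra. rewrite Rmax_right in Ht by lra.
    assert (Hp : 0 < P F v x0 t) by (apply Hii; lra).
    transitivity (dg F v x0 t). apply is_derive_unique, (g_der_u F v HF Hv x0 t Hp).
    unfold dg, k, h.
    replace (-/2 - 1) with (- (3/2)) by field. rewrite Rpower_Ropp.
    rewrite <- (Rpower_mult_distr 2 (H0 F v x0 - Upot F t)) by (unfold P in Hp; lra).
    rewrite Rpower_2_32.
    pose proof (Rpower_pos (H0 F v x0 - Upot F t) (3/2)). match goal with |- ?a = ?b => change (@eq R a b) end. field. lra. }
  rewrite EI, RInt_Rmult_l, Eg.
  - unfold crit_expr, k, h, dH0. field. lra.
  - apply (ex_RInt_continuous (V:=R_CompleteNormedModule)). intros z Hz.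
    rewrite Rmin_left in Hz by lra. rewrite Rmax_right in Hz by lra.
    apply h_cont; auto. apply Hii; lra.
Qed.

End Global2.

Section Main.
Variables F v : R -> R.
Variable y : R -> R -> R.
Hypothesis HF : smooth F.
Hypothesis Hv : smooth v.
Hypothesis Hex : forall x, 0 <= x <= 1 -> is_solution F x (v x) (fun t => y t x).
Hypothesis Hvpos : forall x, 0 <= x <= 1 -> 0 < v x.
Hypothesis Hii : forall x z, 0 <= x <= 1 -> x <= z -> 0 < H0 F v x - Upot F z.

Definition TT x Y := first_time (fun t => y t x) Y.

Lemma part x : 0 <= x <= 1 ->
  (forall t1 t2, 0 <= t1 < t2 -> y t1 x < y t2 x) /\
  (exists fe, continuity fe /\ forall t, 0 <= t -> fe t = y t x) /\
  y 0 x = x /\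
  (forall Y, x <= Y -> TT x Y = RInt (gfun F v x) x Y /\ 0 <= TT x Y /\ y (TT x Y) x = Y) /\
  (forall Y tau, 0 <= tau -> y tau x = Y -> TT x Y = tau).
Proof.
  intros Hx. destruct (Hex x Hx) as [df [Hf0 [Hdf0 Hd]]].
  assert (Hvx := Hvpos x Hx). assert (Hi : forall z, x <= z -> 0 < H0 F v x - Upot F z) by auto.
  split; [|split; [|split; [|split]]].
  - apply (f_mono F v HF x Hvx Hi (fun t => y t x) df Hf0 Hdf0 Hd).
  - exists (ext (fun t => y t x) (df 0)). split.
    apply (fe_cont F (fun t => y t x) df Hd). intros t Ht; unfold ext; destruct (Rlt_dec t 0); [lra|reflexivity].
  - exact Hf0.
  - intros Y HY. apply (T_first F v HF x Hvx Hi (fun t => y t x) df Hf0 Hdf0 Hd Y HY).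
  - intros Y tau. apply (first_time_f F v HF x Hvx Hi (fun t => y t x) df Hf0 Hdf0 Hd Y tau).
Qed.

Lemma mono_le x t1 t2 : 0 <= x <= 1 -> 0 <= t1 <= t2 -> y t1 x <= y t2 x.
Proof. intros Hx [H1 H2]. destruct (part x Hx) as [Hm _].
  destruct (Rle_lt_or_eq_dec _ _ H2). left; apply Hm; lra. subst; lra. Qed.

Lemma C1_C2 :
  (forall t x x', 0 <= t -> 0 <= x <= 1 -> 0 <= x' <= 1 -> x <> x' -> y t x <> y t x') <->
  (forall Y x1 x2, 0 < Y -> 0 <= x1 -> x1 < x2 -> x2 <= Rmin Y 1 -> TT x2 Y < TT x1 Y).
Proof.
  split.
  - intros HC1 Y x1 x2 HY H1 H12 H2.
    pose proof (Rmin_l Y 1) as Hm1. pose proof (Rmin_r Y 1) as Hm2.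
    assert (Hx1 : 0 <= x1 <= 1) by lra. assert (Hx2 : 0 <= x2 <= 1) by lra.
    destruct (part x1 Hx1) as [M1 [[fe1 [Hc1 He1]] [Y1 [T1 _]]]].
    destruct (part x2 Hx2) as [M2 [[fe2 [Hc2 He2]] [Y2 [T2 _]]]].
    destruct (T1 Y ltac:(lra)) as [_ [Ht1 Hy1]].
    destruct (T2 Y ltac:(lra)) as [_ [Ht2 Hy2]].
    destruct (Rlt_le_dec (TT x2 Y) (TT x1 Y)) as [|Hle]; auto. exfalso.
    set (t1 := TT x1 Y) in *. set (t2 := TT x2 Y) in *.
    assert (y t1 x2 <= Y) by (rewrite <- Hy2; apply mono_le; auto).
    destruct (IVT_gen (fun t => fe2 t - fe1 t) 0 t1 0) as [s [Hs Hs0]].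
    + intros t. apply continuity_pt_minus; auto.
    + rewrite !He1, !He2 by lra. rewrite Y1, Y2.
      pose proof (Rmin_r (x2 - x1) (y t1 x2 - y t1 x1)). pose proof (Rmax_l (x2 - x1) (y t1 x2 - y t1 x1)).
      lra.
    + rewrite Rmin_left in Hs by lra. rewrite Rmax_right in Hs by lra.
      rewrite He1, He2 in Hs0 by lra. apply (HC1 s x1 x2); try lra.
  - intros HC2.
    assert (K : forall t a b, 0 <= t -> 0 <= a <= 1 -> 0 <= b <= 1 -> a < b -> y t a = y t b -> False).
    { intros t a b Ht Ha Hb Hab Heq.
      destruct (part a Ha) as [_ [_ [_ [_ Ua]]]].
      destruct (part b Hb) as [_ [_ [Yb [_ Ub]]]].
      assert (b <= y t b) by (rewrite <- Yb at 1; apply mono_le; lra).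
      specialize (HC2 (y t b) a b ltac:(lra) ltac:(lra) Hab).
      rewrite (Ua (y t b) t Ht Heq), (Ub (y t b) t Ht eq_refl) in HC2.
      assert (b <= Rmin (y t b) 1) by (apply Rmin_glb; lra). specialize (HC2 H0). lra. }
    intros t x x' Ht Hx Hx' Hne Heq.
    destruct (Rdichotomy _ _ Hne).
    + exact (K t x x' Ht Hx Hx' H Heq).
    + exact (K t x' x Ht Hx' Hx H (eq_sym Heq)).
Qed.

Lemma crit_pos :
  (forall Y, 0 < Y -> forall x, 0 <= x <= Rmin Y 1 -> 0 <= crit_expr F v x Y) ->
  forall Y, 0 < Y -> forall x, 0 <= x <= Rmin Y 1 -> 0 < crit_expr F v x Y.
Proof.
  intros HC Y HY x Hx.
  pose proof (Rmin_l Y 1) as Hm1. pose proof (Rmin_r Y 1) as Hm2.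
  assert (Hx1 : 0 <= x <= 1) by lra.
  assert (Hx2 : 0 <= x <= Rmin (Y+1) 1).
  { split; [lra|]. apply Rmin_glb; lra. }
  pose proof (HC (Y+1) ltac:(lra) x Hx2) as HC1.
  assert (Hvx := Hvpos x Hx1).
  set (h := fun z => / Rpower (H0 F v x - Upot F z) (3/2)).
  assert (Hhc : forall z, x <= z -> continuous h z).
  { intros z Hz. apply h_cont; auto. apply Hii; auto. }
  assert (Hex1 : ex_RInt h x Y).
  { apply (ex_RInt_continuous (V:=R_CompleteNormedModule)). intros z Hz.
    rewrite Rmin_left in Hz by lra. apply Hhc; lra. }
  assert (Hex2 : ex_RInt h Y (Y+1)).
  { apply (ex_RInt_continuous (V:=R_CompleteNormedModule)). intros z Hz.
    rewrite Rmin_left in Hz by lra. apply Hhc; lra. }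
  assert (EC := RInt_Chasles h x Y (Y+1) Hex1 Hex2).
  assert (HJ : 0 < RInt h Y (Y+1)).
  { apply RInt_gt_0. lra. intros; unfold h; apply Rinv_0_lt_compat, Rpower_pos.
    intros; apply Hhc; lra. }
  assert (HI : 0 <= RInt h x Y).
  { apply RInt_ge_0; auto. lra. intros; unfold h; apply Rlt_le, Rinv_0_lt_compat, Rpower_pos. }
  unfold crit_expr in *. fold h in HC1 |- *. rewrite <- EC in HC1.
  unfold plus in HC1; simpl in HC1.
  set (c := (v x * Derive v x - F x) / (2 * sqrt 2)) in *.
  assert (0 < / v x) by (apply Rinv_0_lt_compat; auto).
  destruct (Rle_lt_dec 0 c).
  - assert (0 <= c * RInt h x Y) by (apply Rmult_le_pos; auto). lra.
  - assert (c * RInt h Y (Y+1) < 0) by nra. nra.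
Qed.


Lemma TT_G x Y : 0 <= x <= 1 -> x <= Y -> TT x Y = RInt (gfun F v x) x Y.
Proof. intros Hx HY. destruct (part x Hx) as [_ [_ [_ [T _]]]]. apply T; auto. Qed.

Lemma C2_C3 :
  (forall Y x1 x2, 0 < Y -> 0 <= x1 -> x1 < x2 -> x2 <= Rmin Y 1 -> TT x2 Y < TT x1 Y) <->
  (forall Y, 0 < Y ->
     (forall x, 0 <= x <= Rmin Y 1 -> 0 <= crit_expr F v x Y) /\
     discrete_set (fun x => 0 <= x <= Rmin Y 1 /\ crit_expr F v x Y = 0)).
Proof.
  split.
  - intros HC2.
    assert (Hnn : forall Y, 0 < Y -> forall x, 0 <= x <= Rmin Y 1 -> 0 <= crit_expr F v x Y).
    { intros Y HY x Hx. pose proof (Rmin_l Y 1) as Hm1. pose proof (Rmin_r Y 1) as Hm2.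
      assert (Hm : 0 < Rmin Y 1) by (apply Rmin_pos; lra).
      destruct (Rle_lt_dec 0 (crit_expr F v x Y)) as [|Hneg]; auto. exfalso.
      assert (Hx1 : 0 <= x <= 1) by lra.
      pose proof (Gder F v HF Hv Hvpos Hii x Y Hx1 ltac:(lra)) as HD.
      destruct (deriv_pos_local _ _ _ HD ltac:(lra)) as [d [Hd Hh]].
      destruct (Rlt_le_dec x (Rmin Y 1)) as [Hlt|Hge].
      + set (h := Rmin d (Rmin Y 1 - x) / 2).
        assert (0 < Rmin d (Rmin Y 1 - x)) by (apply Rmin_pos; lra).
        pose proof (Rmin_l d (Rmin Y 1 - x)). pose proof (Rmin_r d (Rmin Y 1 - x)).
        specialize (Hh h ltac:(unfold h; lra)). destruct Hh as [_ Hh].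
        specialize (HC2 Y x (x + h) HY ltac:(lra) ltac:(unfold h; lra) ltac:(unfold h; lra)).
        rewrite !TT_G in HC2 by (unfold h; lra). lra.
      + set (h := Rmin d x / 2).
        assert (0 < Rmin d x) by (apply Rmin_pos; lra).
        pose proof (Rmin_l d x). pose proof (Rmin_r d x).
        specialize (Hh h ltac:(unfold h; lra)). destruct Hh as [Hh _].
        specialize (HC2 Y (x - h) x HY ltac:(unfold h; lra) ltac:(unfold h; lra) ltac:(lra)).
        rewrite !TT_G in HC2 by (unfold h; lra). lra. }
    intros Y HY. split; [apply Hnn; auto|].
    intros x [Hx Hz]. exfalso. pose proof (crit_pos Hnn Y HY x Hx). lra.
  - intros HC3 Y x1 x2 HY H1 H12 H2.
    assert (Hnn : forall Y, 0 < Y -> forall x, 0 <= x <= Rmin Y 1 -> 0 <= crit_expr F v x Y).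
    { intros; apply HC3; auto. }
    pose proof (Rmin_l Y 1) as Hm1. pose proof (Rmin_r Y 1) as Hm2.
    rewrite !TT_G by lra.
    destruct (MVT_gen (fun u => RInt (gfun F v u) u Y) x1 x2 (fun u => - crit_expr F v u Y)) as [c [Hc Hmv]].
    + intros u Hu. rewrite Rmin_left in Hu by lra. rewrite Rmax_right in Hu by lra.
      apply Gder; auto; lra.
    + intros u Hu. rewrite Rmin_left in Hu by lra. rewrite Rmax_right in Hu by lra.
      eapply der_cont, Gder; auto; lra.
    + rewrite Rmin_left in Hc by lra. rewrite Rmax_right in Hc by lra.
      pose proof (crit_pos Hnn Y HY c ltac:(lra)). nra.
Qed.

End Main.

Theorem theorem1 (F v : R -> R) (y : R -> R -> R) :
  smooth F -> smooth v ->
  (forall x, 0 <= x <= 1 -> is_solution F x (v x) (fun t => y t x)) ->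
  (forall x, 0 <= x <= 1 -> forall g : R -> R, is_solution F x (v x) g ->
     forall t, 0 <= t -> g t = y t x) ->
  (forall x, 0 <= x <= 1 -> 0 < v x) ->
  (forall x z, 0 <= x <= 1 -> x <= z -> 0 < H0 F v x - Upot F z) ->
  let C1 := forall t x x', 0 <= t -> 0 <= x <= 1 -> 0 <= x' <= 1 -> x <> x' ->
              y t x <> y t x' in
  let C2 := forall Y x1 x2, 0 < Y -> 0 <= x1 -> x1 < x2 -> x2 <= Rmin Y 1 ->
              first_time (fun t => y t x2) Y < first_time (fun t => y t x1) Y in
  let C3 := forall Y, 0 < Y ->
              (forall x, 0 <= x <= Rmin Y 1 -> 0 <= crit_expr F v x Y) /\
              discrete_set (fun x => 0 <= x <= Rmin Y 1 /\ crit_expr F v x Y = 0) in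
  (C1 <-> C2) /\ (C2 <-> C3).
Proof.
  intros HF Hv Hex _ Hvpos Hii C1 C2 C3.
  split.
  - exact (C1_C2 F v y HF Hex Hvpos Hii).
  - exact (C2_C3 F v y HF Hv Hex Hvpos Hii).
Qed.
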